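(* For every $p\in[0,1]$ and $k\ge1$, there is a (randomized) Locate algorithm that runs in $k$ rounds, succeeds with probability $p$ on every input, and asks at most $p\,k\,n^{1/k}$ queries in expectation on any vector of length $n$.
   Context: Locate problem in the rank query model: there is a vector $\vec{x}=(x_1,\ldots,x_n)$ whose ranks form an unknown permutation of $\{1,\ldots,n\}$; an index $i$ is given and the goal is to output $\mathrm{rank}(x_i)$. Queries have the form ''How is $\mathrm{rank}(x_j)$ compared to $m$?'', with answer ''$<$'', ''$=$'' or ''$>$''. An algorithm runs in $k$ rounds if in each of $k$ rounds it submits a set of queries chosen depending only on answers of earlier rounds (and its randomness), then receives all answers. A randomized algorithm is a distribution over deterministic algorithms. *)

(* Defs.v *)
From HB Require Import structures.
From mathcomp Require Import all_boot all_order all_algebra all_fingroup.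
From mathcomp Require Import reals exp.
Set Implicit Arguments. Unset Strict Implicit. Unset Printing Implicit Defensive.
Import Order.TTheory GRing.Theory Num.Theory.
Local Open Scope ring_scope.

(* The input vector x_1..x_n is represented by the permutation s : 'S_n of
   its ranks: rank(x_j) = (s j).+1  (ranks range over 1..n). *)
Definition rank (n : nat) (s : 'S_n) (j : 'I_n) : nat := (s j).+1.

Definition query (n : nat) := ('I_n * nat)%type.

Definition answer (n : nat) (s : 'S_n) (q : query n) : comparison :=
  Nat.compare (rank s q.1) q.2.

(* Transcript: for each completed round, the list of (query, answer) pairs. *)
Definition transcript (n : nat) := seq (seq (query n * comparison)).

(* A deterministic algorithm (for vector length n and the given index i):
   the queries of the next round as a function of the earlier answers,
   and the final output as a function of all answers. *)
Record det_alg (n : nat) := DetAlg {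
  alg_round : transcript n -> seq (query n);
  alg_output : transcript n -> nat }.

Fixpoint run (n : nat) (A : det_alg n) (s : 'S_n) (r : nat) : transcript n :=
  match r with
  | 0 => [::]
  | r'.+1 => let t := run A s r' in
             rcons t [seq (q, answer s q) | q <- alg_round A t]
  end.

Definition num_queries (n : nat) (A : det_alg n) (s : 'S_n) (k : nat) : nat :=
  sumn [seq size rd | rd <- run A s k].

Definition det_output (n : nat) (A : det_alg n) (s : 'S_n) (k : nat) : nat :=
  alg_output A (run A s k).

(* A randomized algorithm: a (finitely supported) probability distribution
   over deterministic algorithms, given as a list of (weight, algorithm). *)
Definition rand_alg (R : realType) (n : nat) := seq (R * det_alg n).

Definition is_distribution (R : realType) (n : nat) (D : rand_alg R n) : Prop :=
  (forall w, w \in [seq d.1 | d <- D] -> 0 <= w) /\ \sum_(d <- D) d.1 = 1.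

Definition success_prob (R : realType) (n : nat) (D : rand_alg R n)
    (k : nat) (s : 'S_n) (i : 'I_n) : R :=
  \sum_(d <- D) d.1 * (det_output d.2 s k == rank s i)%:R.

Definition expected_queries (R : realType) (n : nat) (D : rand_alg R n)
    (k : nat) (s : 'S_n) : R :=
  \sum_(d <- D) d.1 * (num_queries d.2 s k)%:R.

(* Main.v *)
Require Import Defs.
From HB Require Import structures.
From mathcomp Require Import all_boot all_order all_algebra all_fingroup.
From mathcomp Require Import reals exp.
Import Order.TTheory GRing.Theory Num.Theory.
Local Open Scope ring_scope.
Set Implicit Arguments. Unset Strict Implicit.

Definition cntA (n : nat) (rd : seq (query n * comparison)) : nat :=
  count (fun qa : query n * comparison => if qa.2 is Lt then false else true) rd.

Definition loA (n b : nat) (t : transcript n) : nat :=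
  foldl (fun acc rd => (acc * b + cntA rd)%N) 0%N t.

Definition algA (n k a : nat) (i : 'I_n) : det_alg n :=
  DetAlg (fun t => [seq (i, ((loA a.+1 t * a.+1 + c.+1) * a.+1 ^ (k - (size t).+1) + 1)%N)
                   | c <- iota 0 a])
         (fun t => (loA a.+1 t).+1).

Definition algT (n : nat) : det_alg n := DetAlg (fun _ => [::]) (fun _ => 0%N).

Lemma size_run n (A : det_alg n) s r : size (run A s r) = r.
Proof. by elim: r => //= r IH; rewrite size_rcons IH. Qed.

Lemma nq_const n (A : det_alg n) s c :
  (forall t, size (alg_round A t) = c) -> forall r,
  sumn [seq size rd | rd <- run A s r] = (r * c)%N.
Proof.
move=> Hc; elim=> //= r IH.
by rewrite map_rcons sumn_rcons IH size_map Hc mulSn addnC.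
Qed.

Lemma cmp_nLt x y : (if Nat.compare x y is Lt then false else true) = (y <= x)%N.
Proof.
by elim: x y => [|x IH] [|y] //=; rewrite IH.
Qed.

Lemma count_lt_iota a m : (m <= a)%N -> count (fun c => c < m)%N (iota 0 a) = m.
Proof.
move=> Hm; rewrite -(subnKC Hm) iotaD count_cat add0n.
rewrite (@eq_in_count _ _ predT (iota 0 m)); last first.
  by move=> x; rewrite mem_iota add0n.
rewrite count_predT size_iota.
rewrite (@eq_in_count _ _ pred0 (iota m (a - m))); last first.
  by move=> x; rewrite mem_iota /= => /andP[H _]; rewrite ltnNge H.
by rewrite count_pred0 addn0.
Qed.

Lemma algA_inv n k a (i : 'I_n) (s : 'S_n) :
  (n < a.+1 ^ k)%N -> forall r, (r <= k)%N ->
  loA a.+1 (run (algA k a i) s r) = (s i %/ a.+1 ^ (k - r))%N.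
Proof.
move=> Hn; elim=> [|r IH] Hr.
  by rewrite /= /loA /= subn0 divn_small // (leq_trans (ltn_ord (s i)) (ltnW Hn)).
have Hr' : (r <= k)%N by apply: ltnW.
rewrite /= /loA foldl_rcons -/(loA _ _) IH // size_run.
set w := (a.+1 ^ (k - r.+1))%N.
have Hw : (0 < w)%N by rewrite expn_gt0.
have Ekr : (a.+1 ^ (k - r) = w * a.+1)%N.
  by rewrite /w -expnSr subnSK.
rewrite Ekr divnMA.
set q := (s i %/ w)%N.
rewrite /cntA count_map.
have -> : count (preim (fun q0 => (q0, answer s q0))
   (fun qa : query n * comparison => if qa.2 is Lt then false else true))
   [seq (i, ((q %/ a.+1 * a.+1 + c.+1) * w + 1)%N) | c <- iota 0 a]
   = count (fun c => c < q %% a.+1)%N (iota 0 a).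
  rewrite count_map; apply: eq_count => c /=.
  rewrite /answer /rank cmp_nLt /= addn1 ltnS -leq_divRL //.
  by rewrite -/q {2}(divn_eq q a.+1) leq_add2l.
rewrite count_lt_iota; last by rewrite -ltnS ltn_pmod.
by rewrite -divn_eq.
Qed.

Lemma algA_correct n k a (i : 'I_n) (s : 'S_n) :
  (n < a.+1 ^ k)%N -> det_output (algA k a i) s k = rank s i.
Proof.
move=> Hn; rewrite /det_output /= algA_inv // subnn expn0 divn1.
by [].
Qed.

Theorem proposition2 (R : realType) (p : R) (k : nat) :
  0 <= p <= 1 -> (1 <= k)%N ->
  forall (n : nat) (i : 'I_n),
  exists D : rand_alg R n,
    is_distribution D /\
    forall s : 'S_n,
      p <= success_prob D k s i /\
      expected_queries D k s <= p * k%:R * (n%:R `^ (k%:R)^-1).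
Proof.
move=> /andP[p0 p1] k1 n i.
have [a Ha Hmax] : exists2 a, (a ^ k <= n)%N & (n < a.+1 ^ k)%N.
  have exP : exists c, (c ^ k <= n)%N by exists 0%N; rewrite exp0n.
  have ubP : forall c, (c ^ k <= n)%N -> (c <= n)%N.
    move=> c Hc; apply: leq_trans Hc.
    case: c => // c; rewrite -[X in (X <= _)%N]expn1; apply: leq_pexp2l => //.
  case: (ex_maxnP exP ubP) => m Hm Hmx; exists m => //.
  by rewrite ltnNge; apply/negP => /Hmx; rewrite ltnn.
exists [:: (p, algA k a i); (1 - p, algT n)].
split.
  split.
    move=> w /=; rewrite !inE => /orP[/eqP ->|/eqP ->] //.
    by rewrite subr_ge0.
  by rewrite !big_cons big_nil /= addr0 addrC subrK.
move=> s; split.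
  rewrite /success_prob !big_cons big_nil (algA_correct _ _ Hmax) eqxx mulr1 addr0.
  rewrite -[X in X <= _]addr0 lerD2l; apply: mulr_ge0; last by rewrite ler0n.
  by rewrite subr_ge0.
rewrite /expected_queries !big_cons big_nil addr0.
rewrite /num_queries (@nq_const _ (algT n) s 0%N) // muln0 mulr0 addr0.

rewrite (@nq_const _ _ s a); last by move=> t; rewrite /= size_map size_iota.
rewrite -mulrA; apply: ler_wpM2l => //.
rewrite natrM; apply: ler_wpM2l => //.
have k0 : (k%:R : R) != 0 by rewrite pnatr_eq0 -lt0n.
have -> : (a%:R : R) = (a%:R `^ k%:R) `^ (k%:R)^-1.
  by rewrite -powRrM mulfV // powRr1.
rewrite powR_mulrn // -natrX.
apply: ge0_ler_powR; rewrite ?invr_ge0 ?ler0n ?ler_nat //.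
  by rewrite nnegrE.
by rewrite nnegrE.
Qed.
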